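(* Fix integers $q\ge 1$ and $k\ge 5$, and let $G(q,k)$ be the graph on vertex set $\{v_0,v_1,\ldots,v_{kq}\}$ in which, with all indices taken modulo $kq+1$, the neighbourhood of $v_i$ is $$\{v_{i-1},v_{i+1}\}\cup\{v_{i+kj+m} : m=2,3,\ldots,k-1,\ j=0,1,\ldots,q-1\}.$$ Then $G(q,k)$ is $C_5$-free.
   Context: $C_5$ is the cycle on five vertices. A graph is $H$-free if it contains no induced subgraph isomorphic to $H$. *)

(* Defs.v *)
From mathcomp Require Import all_boot.
Set Implicit Arguments. Unset Strict Implicit. Unset Printing Implicit Defensive.

Definition has_induced (T U : finType) (e : rel T) (h : rel U) : Prop :=
  exists f : U -> T, injective f /\ forall x y, e (f x) (f y) = h x y.

Definition C5_adj : rel 'I_5 :=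
  fun i j => (j == (i + 1) %% 5 :> nat) || (i == (j + 1) %% 5 :> nat).

Definition H_free (T U : finType) (e : rel T) (h : rel U) : Prop :=
  ~ has_induced e h.

Definition G_adj (q k : nat) : rel 'I_(k * q).+1 :=
  fun x y =>
    let n := (k * q).+1 in
    [|| (y == (x + 1) %% n :> nat),
        (y == (x + n - 1) %% n :> nat)
      | [exists j : 'I_q, exists m : 'I_k,
           (2 <= m) && (y == (x + k * j + m) %% n :> nat)]].
Arguments G_adj q k : clear implicits.

(* Main.v *)
From mathcomp Require Import all_boot zify.
Set Implicit Arguments. Unset Strict Implicit. Unset Printing Implicit Defensive.
Require Import Defs.

Definition Dn (k q t : nat) := exists j, 1 <= j <= q - 1 /\ (t = k*j \/ t = k*j+1).

Lemma euclid k a b c d : b < k -> d < k -> k*a + b = k*c + d -> b = d.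
Proof.
move=> hb hd e. have := congr1 (modn^~ k) e => /=.
by rewrite (mulnC k a) (mulnC k c) !modnMDl !modn_small.
Qed.

Lemma modn_big a n : n <= a -> a < n + n -> a %% n = a - n.
Proof.
move=> h1 h2. rewrite -{1}(subnK h1) modnDr modn_small //. lia.
Qed.

Lemma Gchar q k (x y : 'I_(k*q).+1) : 1 <= q -> 5 <= k -> x != y ->
  G_adj q k x y <-> ~ Dn k q (if x <= y then y - x else x - y).
Proof.
move=> hq hk hxy.
have hX := ltn_ord x. have hY := ltn_ord y.
have hxy' : nat_of_ord x <> nat_of_ord y by move=> e; move/eqP: hxy; apply; apply: val_inj.
move: hX hY hxy'. rewrite /G_adj.
move: (nat_of_ord x) (nat_of_ord y) => X Y hX hY hXY.
set n := (k*q).+1.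
have hkq : k <= k * q by rewrite -{1}(muln1 k) leq_mul2l hq orbT.
have ht : (X <= Y /\ (if X <= Y then Y - X else X - Y) = Y - X) \/
          (Y < X /\ (if X <= Y then Y - X else X - Y) = X - Y).
{ case: leqP => h; [left|right]; done. }
move: ht. move: (if X <= Y then Y - X else X - Y) => t ht.
split.
- move/or3P => [/eqP e | /eqP e | /existsP [j /existsP [m /andP [hm /eqP e]]]] [j0 [hj0 he]].
  + have hj1 : k * j0 + 1 <= k * q by nia.
    case: (ltnP (X+1) n) => h.
    * rewrite modn_small // in e. nia.
    * have e2 : X + 1 = n by lia.
      rewrite e2 modnn in e. nia.
  + have hj1 : k * j0 + 1 <= k * q by nia.
    case: (posnP X) => h.
    * subst X. rewrite add0n modn_small in e; last by rewrite /n; lia.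
      rewrite /n in e. nia.
    * rewrite modn_big in e; [ | rewrite /n; lia | rewrite /n; lia]. nia.
  + have hm2 := ltn_ord m. have hj2 := ltn_ord j.
    move: hm e hm2 hj2. move: (nat_of_ord m) (nat_of_ord j) => M J hm e hm2 hj2.
    have hJ : k * J + k <= k * q.
    { rewrite -mulnSr. by rewrite leq_mul2l hj2 orbT. }
    case: (ltnP (X + k*J + M) n) => h.
    * rewrite modn_small // in e.
      case: he => he.
      -- have := @euclid k J M j0 0. lia.
      -- have := @euclid k J M j0 1. lia.
    * rewrite modn_big in e; [ | by [] | rewrite /n; lia].
      have hq1 : k * (q - 1 - J) + k = k * q - k * J.
      { rewrite -mulnSr -mulnBr. congr (k * _). lia. }
      case: he => he.
      -- have := @euclid k (q - 1 - J) (k.+1 - M) j0 0. lia.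
      -- have := @euclid k (q - 1 - J) (k.+1 - M) j0 1. lia.
- move=> hD.
  have ht' : t <= k * q by lia.
  have hdiv := divn_eq t k. have hMk : t %% k < k by apply: ltn_pmod; lia.
  move: hdiv hMk. move: (t %/ k) (t %% k) => J M hdiv hMk.
  rewrite (mulnC J k) in hdiv.
  have hq1 : forall J, J < q -> k * (q - 1 - J) + k = k * q - k * J.
  { move=> J0 hJ0. rewrite -mulnSr -mulnBr. congr (k * _). lia. }
  case: (leqP 2 M) => hM.
  + have hJq : J < q.
    { case: (ltnP J q) => // hJ. have : k * q <= k * J by rewrite leq_mul2l hJ orbT. lia. }
    have := hq1 J hJq => hq2.
    apply/or3P; apply Or33.
    case: ht => [[hle ht]|[hlt ht]].
    * apply/existsP; exists (Ordinal hJq); apply/existsP; exists (Ordinal hMk).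
      rewrite /= hM /=; apply/eqP. rewrite modn_small; rewrite /n; lia.
    * have hJ' : q - 1 - J < q by lia.
      have hM' : k.+1 - M < k by lia.
      apply/existsP; exists (Ordinal hJ'); apply/existsP; exists (Ordinal hM').
      rewrite /=. apply/andP; split; first by lia.
      apply/eqP. rewrite modn_big; rewrite /n; lia.
  + have [hJ0|hJq] : J = 0 \/ q <= J.
    { case: (ltnP J q) => hJ; [|by right].
      case: (posnP J) => hJ0; [by left|].
      exfalso; apply: hD; exists J; split; lia. }
    * subst J. case: ht => [[hle ht]|[hlt ht]].
      -- apply/or3P; apply Or31; apply/eqP. rewrite modn_small; rewrite /n; lia.
      -- apply/or3P; apply Or32; apply/eqP. rewrite modn_big; rewrite /n; lia.
    * have : k * q <= k * J by rewrite leq_mul2l hJq orbT.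
      move=> hkJ.
      case: ht => [[hle ht]|[hlt ht]].
      -- apply/or3P; apply Or32; apply/eqP. rewrite modn_small; rewrite /n; lia.
      -- apply/or3P; apply Or31; apply/eqP.
         have -> : X + 1 = n by rewrite /n; lia.
         rewrite modnn. lia.
Qed.

From Stdlib Require Import ZArith Lia Classical.
Section CoreZ.
Local Open Scope Z_scope.
Local Unset Implicit Arguments.
Local Set Bullet Behavior "Strict Subproofs".
Definition D (k q t : Z) := exists j, 1 <= j <= q-1 /\ (t = k*j \/ t = k*j+1).

Lemma mul_ge k m q : 0 <= k -> q <= m -> k*q <= k*m.
Proof. intros; nia. Qed.

Lemma Dres k q x y : 5 <= k -> D k q (Z.abs (y - x)) ->
  exists m r, y - x = k*m + r /\ (r = 0 \/ (r = 1 /\ y - x > 0) \/ (r = -1 /\ y - x < 0)).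
Proof.
intros hk [j [hj [e|e]]].
- destruct (Z_le_gt_dec 0 (y-x)).
  + exists j, 0; lia.
  + exists (-j), 0; lia.
- destruct (Z_le_gt_dec 0 (y-x)).
  + exists j, 1; lia.
  + exists (-j), (-1); lia.
Qed.

Definition chordP (s x y N : Z) : Prop :=
  match s with
  | 0 => (x = 0 /\ y = N) \/ (x = N /\ y = 0)
  | 1 => y - x = 1 \/ y - x < 0
  | -1 => y - x = -1 \/ y - x > 0
  | _ => True
  end.

Lemma chord k q x y m s : 5 <= k -> 1 <= q -> 0 <= x <= k*q -> 0 <= y <= k*q -> x <> y ->
  ~ D k q (Z.abs (y - x)) -> y - x = k*m + s -> chordP s x y (k*q).
Proof.
intros hk hq hx hy hxy hD e.
assert (Hq: forall j, 1 <= j <= q - 1 -> ~ (Z.abs (y-x) = k*j \/ Z.abs (y-x) = k*j+1)).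
{ intros j hj h; apply hD; exists j; auto. }
destruct (Z_lt_le_dec m 0) as [hm|hm]; [destruct (Z_lt_le_dec m (-q+1)) as [hm2|hm2]|
   destruct (Z_lt_le_dec m q) as [hm2|hm2]].
-
  assert (k*q <= k*(-m)) by (apply mul_ge; lia).
  unfold chordP; destruct s as [|p|p]; try destruct p; simpl; try lia; trivial.
- assert (k*(-m) <= k*(q-1)) by (apply mul_ge; lia).
  assert (k*1 <= k*(-m)) by (apply mul_ge; lia).
  unfold chordP; destruct s as [|p|p]; try destruct p; trivial.
  all: first [lia | destruct (Hq (-m)); lia].
- destruct (Z.eq_dec m 0) as [->|hm0].
  + unfold chordP; destruct s as [|p|p]; try destruct p; trivial; lia.
  + assert (k*m <= k*(q-1)) by (apply mul_ge; lia).
    assert (k*1 <= k*m) by (apply mul_ge; lia).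
    unfold chordP; destruct s as [|p|p]; try destruct p; trivial.
    all: first [lia | destruct (Hq m); lia].
- assert (k*q <= k*m) by (apply mul_ge; lia).
  unfold chordP; destruct s as [|p|p]; try destruct p; simpl; try lia; trivial.
Qed.

Lemma sumR k M R : 5 <= k -> k*M + R = 0 -> -5 <= R <= 5 -> R = 0 \/ R = 5 \/ R = -5.
Proof.
intros hk e hR.
destruct (Z_lt_le_dec M 0).
- assert (k*1 <= k*(-M)) by (apply mul_ge; lia). lia.
- destruct (Z.eq_dec M 0) as [->|]. lia.
  assert (k*1 <= k*M) by (apply mul_ge; lia). lia.
Qed.

Lemma core k q b0 b1 b2 b3 b4 : 5 <= k -> 1 <= q ->
  0 <= b0 <= k*q -> 0 <= b1 <= k*q -> 0 <= b2 <= k*q -> 0 <= b3 <= k*q -> 0 <= b4 <= k*q ->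
  b0 <> b1 -> b0 <> b2 -> b0 <> b3 -> b0 <> b4 -> b1 <> b2 -> b1 <> b3 -> b1 <> b4 ->
  b2 <> b3 -> b2 <> b4 -> b3 <> b4 ->
  D k q (Z.abs (b1 - b0)) -> D k q (Z.abs (b2 - b1)) -> D k q (Z.abs (b3 - b2)) ->
  D k q (Z.abs (b4 - b3)) -> D k q (Z.abs (b0 - b4)) ->
  ~ D k q (Z.abs (b2 - b0)) -> ~ D k q (Z.abs (b3 - b1)) -> ~ D k q (Z.abs (b4 - b2)) ->
  ~ D k q (Z.abs (b0 - b3)) -> ~ D k q (Z.abs (b1 - b4)) -> False.
Proof.
intros hk hq h0 h1 h2 h3 h4 n01 n02 n03 n04 n12 n13 n14 n23 n24 n34 e0 e1 e2 e3 e4 c0 c1 c2 c3 c4.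
destruct (Dres _ _ _ _ hk e0) as [m0 [r0 [d0 hr0]]].
destruct (Dres _ _ _ _ hk e1) as [m1 [r1 [d1 hr1]]].
destruct (Dres _ _ _ _ hk e2) as [m2 [r2 [d2 hr2]]].
destruct (Dres _ _ _ _ hk e3) as [m3 [r3 [d3 hr3]]].
destruct (Dres _ _ _ _ hk e4) as [m4 [r4 [d4 hr4]]].
pose proof (chord k q b0 b2 (m0+m1) (r0+r1) hk hq h0 h2 n02 c0 ltac:(clear - d0 d1; lia)) as k0.
pose proof (chord k q b1 b3 (m1+m2) (r1+r2) hk hq h1 h3 n13 c1 ltac:(clear - d1 d2; lia)) as k1.
pose proof (chord k q b2 b4 (m2+m3) (r2+r3) hk hq h2 h4 n24 c2 ltac:(clear - d2 d3; lia)) as k2.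
pose proof (chord k q b3 b0 (m3+m4) (r3+r4) hk hq h3 h0 (not_eq_sym n03) c3 ltac:(clear - d3 d4; lia)) as k3.
pose proof (chord k q b4 b1 (m4+m0) (r4+r0) hk hq h4 h1 (not_eq_sym n14) c4 ltac:(clear - d4 d0; lia)) as k4.
assert (hs : r0+r1+r2+r3+r4 = 0 \/ r0+r1+r2+r3+r4 = 5 \/ r0+r1+r2+r3+r4 = -5).
{ apply (sumR k (m0+m1+m2+m3+m4)). lia. clear - d0 d1 d2 d3 d4; lia. clear -hr0 hr1 hr2 hr3 hr4; lia. }
clear c0 c1 c2 c3 c4 e0 e1 e2 e3 e4 d0 d1 d2 d3 d4.
assert (k*1 <= k*q) by (apply mul_ge; lia).
remember (k*q) as N eqn:HN. clear HN.
destruct hr0 as [->|[[-> ?]|[-> ?]]]; destruct hr1 as [->|[[-> ?]|[-> ?]]];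
destruct hr2 as [->|[[-> ?]|[-> ?]]]; destruct hr3 as [->|[[-> ?]|[-> ?]]];
destruct hr4 as [->|[[-> ?]|[-> ?]]]; first [exfalso; clear -hs; lia | unfold chordP in k0, k1, k2, k3, k4; simpl in k0, k1, k2, k3, k4;
  repeat match goal with H : _ \/ _ |- _ => destruct H as [H|H] end;
  first [congruence | clear n01 n02 n03 n04 n12 n13 n14 n23 n24 n34; lia]].
Qed.

End CoreZ.

Lemma DnD k q (X Y : nat) : Dn k q (if X <= Y then Y - X else X - Y) <->
  D (Z.of_nat k) (Z.of_nat q) (Z.abs (Z.of_nat Y - Z.of_nat X)).
Proof.
case: leqP => h; split.
- move=> [j [hj he]]; exists (Z.of_nat j); lia.
- move=> [j [hj he]]; exists (Z.to_nat j); lia.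
- move=> [j [hj he]]; exists (Z.of_nat j); lia.
- move=> [j [hj he]]; exists (Z.to_nat j); lia.
Qed.

Theorem lemma2p5 (q k : nat) :
  1 <= q -> 5 <= k -> H_free (G_adj q k) C5_adj.
Proof.
move=> hq hk [f [finj hf]].
pose A (i : 'I_5) := Z.of_nat (f i).
have E (i j : 'I_5) : i != j -> C5_adj i j = false ->
    D (Z.of_nat k) (Z.of_nat q) (Z.abs (A j - A i)).
{ move=> hij hc. have hne : f i != f j by rewrite (eqtype.inj_eq finj).
  have [_ h] := Gchar hq hk hne. rewrite hf hc DnD in h.
  apply: NNPP => hn. by have := h hn. }
have C (i j : 'I_5) : i != j -> C5_adj i j = true ->
    ~ D (Z.of_nat k) (Z.of_nat q) (Z.abs (A j - A i)).
{ move=> hij hc. have hne : f i != f j by rewrite (eqtype.inj_eq finj).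
  have [h _] := Gchar hq hk hne. rewrite hf hc DnD in h. exact: h. }
have R (i : 'I_5) : (0 <= A i <= Z.of_nat k * Z.of_nat q)%Z.
{ rewrite /A; move: (nat_of_ord (f i)) (ltn_ord (f i)) => x hx; lia. }
have N (i j : 'I_5) : i != j -> A i <> A j.
{ move=> hij e. have : f i = f j by apply: val_inj; exact: (Nat2Z.inj _ _ e).
  move/finj=> e2. by rewrite e2 eqxx in hij. }
pose o0 := @Ordinal 5 0 isT. pose o1 := @Ordinal 5 1 isT. pose o2 := @Ordinal 5 2 isT.
pose o3 := @Ordinal 5 3 isT. pose o4 := @Ordinal 5 4 isT.
apply: (@core (Z.of_nat k) (Z.of_nat q) (A o0) (A o2) (A o4) (A o1) (A o3)).
all: try lia.
all: try (apply: R).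
all: try (apply: N; by []).
all: try (apply: E; by []).
all: try (apply: C; by []).
Qed.
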